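(* Let $d\in\mathbb{N}$. Then for any integer $k\geq 19^{2d-1}+1$ and any step preserving continuous map $F\colon S_{\ell_\infty^k}\to S_{\ell_1^k}$ such that $F(1,\ldots,1)\neq F(-1,\ldots,-1)$, we have $\omega_F(\tfrac1d)\geq\tfrac12$. In particular, there is no sequence $(F_k\colon S_{\ell_\infty^k}\to S_{\ell_1^k})_{k=1}^\infty$ of equi-uniformly continuous step preserving homeomorphisms.
   Context: For $p\in\{1,\infty\}$, $S_{\ell_p^k}$ denotes the unit sphere of $\mathbb{R}^k$ with the $\ell_p$-norm. Writing $F=(F_i)_{i=1}^k$ for the coordinate functions, $F$ is step preserving if for all $x=(x_i)_{i=1}^k\in S_{\ell_\infty^k}$ and all $i,j\in\{1,\dots,k\}$, $x_i=x_j$ implies $F_i(x)=F_j(x)$. The modulus of uniform continuity of a map $F$ between metric spaces is $\omega_F(t)=\sup\{d(F(x),F(y)): d(x,y)\le t\}$. A sequence $(F_k)_k$ is equi-uniformly continuous if for every $\varepsilon>0$ there is $\delta>0$ with $\omega_{F_k}(\delta)<\varepsilon$ for all $k$. *)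

(* Defs.v *)
From HB Require Import structures.
From mathcomp Require Import all_boot all_order all_algebra.
From mathcomp Require Import all_classical all_reals ereal.
Unset Printing Implicit Defensive.
Import Order.TTheory GRing.Theory Num.Theory.
Local Open Scope classical_set_scope.
Local Open Scope ring_scope.

Section Defs.
Variable R : realType.

Definition vsub {k} (x y : 'I_k -> R) : 'I_k -> R := fun i => x i - y i.

Definition linf {k} (x : 'I_k -> R) : R := \big[Num.max/0]_(i < k) `|x i|.
Definition l1 {k} (x : 'I_k -> R) : R := \sum_(i < k) `|x i|.

Definition Sinf k : set ('I_k -> R) := [set x | linf x = 1].
Definition S1 k : set ('I_k -> R) := [set x | l1 x = 1].

(* F maps S_{l_inf^k} into S_{l_1^k} (values outside the sphere are irrelevant) *)
Definition maps_into {k} (F : ('I_k -> R) -> ('I_k -> R)) :=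
  forall x, Sinf k x -> S1 k (F x).

Definition cont_inf_1 {k} (F : ('I_k -> R) -> ('I_k -> R)) :=
  forall x, Sinf k x -> forall e : R, 0 < e -> exists2 delta : R, 0 < delta &
    forall y, Sinf k y -> linf (vsub x y) < delta -> l1 (vsub (F x) (F y)) < e.

Definition cont_1_inf {k} (G : ('I_k -> R) -> ('I_k -> R)) :=
  forall x, S1 k x -> forall e : R, 0 < e -> exists2 delta : R, 0 < delta &
    forall y, S1 k y -> l1 (vsub x y) < delta -> linf (vsub (G x) (G y)) < e.

Definition step_preserving {k} (F : ('I_k -> R) -> ('I_k -> R)) :=
  forall x, Sinf k x -> forall i j : 'I_k, x i = x j -> F x i = F x j.

Definition homeo {k} (F : ('I_k -> R) -> ('I_k -> R)) :=
  maps_into F /\ cont_inf_1 F /\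
  exists G : ('I_k -> R) -> ('I_k -> R),
    [/\ forall y, S1 k y -> Sinf k (G y),
        cont_1_inf G,
        forall x, Sinf k x -> G (F x) = x &
        forall y, S1 k y -> F (G y) = y].

Definition omega {k} (F : ('I_k -> R) -> ('I_k -> R)) (t : R) : \bar R :=
  ereal_sup [set r : \bar R | exists x y, [/\ Sinf k x, Sinf k y,
               linf (vsub x y) <= t & r = (l1 (vsub (F x) (F y)))%:E]].

End Defs.

Arguments vsub {R k}.
Arguments linf {R k}.
Arguments l1 {R k}.
Arguments Sinf {R}.
Arguments S1 {R}.
Arguments maps_into {R k}.
Arguments cont_inf_1 {R k}.
Arguments cont_1_inf {R k}.
Arguments step_preserving {R k}.
Arguments homeo {R k}.
Arguments omega {R k}.

(* Main.v *)
Require Import Defs.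
From HB Require Import structures.
From mathcomp Require Import all_boot all_order all_algebra.
From mathcomp Require Import all_classical all_reals ereal.
From mathcomp Require Import zify ring lra.
Import Order.TTheory GRing.Theory Num.Theory.
Section Nat.
Variable d : nat.
Hypothesis d_gt0 : 0 < d.
Definition n := (2 * d).-1.
Definition lam t g := minn (2 * d) (minn g t + (t - 2 * d)).
Definition sep t g := lam t g != lam t n.
Definition mu t (c : bool) h :=
  if sep t h && (odd h == c) && (lam t h != 0) then (lam t h).+1
  else if (0 < h) && sep t h.-1 && (odd h.-1 == c) && (lam t h.-1 == 0) then (lam t h).-1
  else lam t h.

Lemma lam_le t g : lam t g <= 2 * d.
Proof. rewrite /lam; lia. Qed.

Lemma lam_adj t t' g : g <= n -> t <= 4 * d -> t' <= 4 * d -> t != 2 * d -> t' != 2 * d ->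
  (t' = t.+1 \/ (t = (2 * d).-1 /\ t' = (2 * d).+1)) ->
  lam t g <= (lam t' g).+1 /\ lam t' g <= (lam t g).+1.
Proof. rewrite /lam /n => *; lia. Qed.

Lemma sep_facts t h : t <= 4 * d -> t != 2 * d -> h <= n -> sep t h ->
  [/\ h < n, lam t h.+1 = (lam t h).+1, (lam t h).+1 <= 2 * d &
      (lam t h = 0 -> h = 0)].
Proof. rewrite /sep /lam /n => *. split; lia. Qed.
End Nat.
Section Nat2.
Variable d : nat.
Hypothesis d_gt0 : 0 < d.
Local Notation n := (n d).
Local Notation lam := (lam d).
Local Notation sep := (sep d).
Local Notation mu := (mu d).

Lemma mu_close t c h : t <= 4 * d -> t != 2 * d -> h <= n ->
  [/\ mu t c h <= (lam t h).+1, lam t h <= (mu t c h).+1 & mu t c h <= 2 * d].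
Proof.
move=> ht t2 hn; rewrite /mu.
case: ifP => [/andP[/andP[s _] _]|_].
  have [_ _ ? _] := @sep_facts d d_gt0 _ _ ht t2 hn s; split; lia.
case: ifP => [/andP[/andP[/andP[h0 s] _] _]|_].
  have := @lam_le d d_gt0 t h; split; lia.
have := @lam_le d d_gt0 t h; split; lia.
Qed.

Lemma mu_tie t c h : t <= 4 * d -> t != 2 * d -> h <= n -> sep t h -> odd h = c ->
  mu t c h = mu t c h.+1.
Proof.
move=> ht t2 hn s oh.
have [hlt e1 _ e0] := @sep_facts d d_gt0 _ _ ht t2 hn s.
rewrite /mu /= s oh eqxx /=.
have -> : (~~ c == c) = false by case: c {oh}.
rewrite andbF /= e1.
case: eqP => [z|nz] /=.
  have h0 := e0 z; subst h; rewrite z /=; lia.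
by [].
Qed.

Lemma mu_top t c : t < 2 * d -> mu t c 0 = 0.
Proof.
move=> ht; rewrite /mu /=.
have -> : lam t 0 = 0 by rewrite /lam; lia.
by rewrite eqxx /= andbF.
Qed.

Lemma mu_bot t c : 2 * d < t <= 4 * d -> mu t c n = 2 * d.
Proof.
move=> ht; rewrite /mu {1}/sep eqxx /=.
have hl : lam t n = 2 * d by rewrite /lam /n; lia.
case: ifP => [/andP[/andP[/andP[h0 s] _] /eqP z]|_]; last by [].
exfalso; move: z; rewrite /lam /n; lia.
Qed.
End Nat2.

Lemma card_interval k a b : a <= b <= k ->
  #|[pred i : 'I_k | a <= i < b]| = b - a.
Proof.
move=> /andP[ab bk].
rewrite -sum1_card.
have e : \sum_(a <= i < b) 1 = \sum_(0 <= i < k | a <= i < b) 1.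
  rewrite [LHS](big_nat_widenl a 0) // [LHS](big_nat_widen 0 b k) //.
rewrite big_mkord in e.
have -> : \sum_(i in [pred i : 'I_k | a <= i < b]) 1 = \sum_(i < k | a <= i < b) 1 by [].
by rewrite -e sum_nat_const_nat muln1.
Qed.

Local Open Scope classical_set_scope.
Local Open Scope ring_scope.

Section Gen.
Variable R : realType.
Variable k : nat.
Implicit Types x y : 'I_k -> R.

Lemma linf_le x (c : R) : 0 <= c -> (forall i, `|x i| <= c) -> linf x <= c.
Proof. by move=> c0 H; rewrite /linf; apply: bigmax_le. Qed.

Lemma le_linf x i : `|x i| <= linf x.
Proof. by rewrite /linf; apply: le_bigmax. Qed.

Variable F : ('I_k -> R) -> ('I_k -> R).
Hypothesis Fm : maps_into F.

Definition mass (P : pred 'I_k) x := \sum_(i | P i) `|F x i|.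

Lemma mass_all x : Sinf k x -> \sum_i `|F x i| = 1.
Proof. by move=> /Fm. Qed.

Lemma mass_split P x : Sinf k x -> mass P x + mass (predC P) x = 1.
Proof. by move=> /mass_all <-; rewrite /mass [RHS](bigID P). Qed.

Lemma mass_step P x y : Sinf k x -> Sinf k y ->
  (mass P x - mass P y) * 2 <= l1 (vsub (F x) (F y)).
Proof.
move=> Sx Sy; have ex := mass_split P x Sx; have ey := mass_split P y Sy.
rewrite /l1 (bigID P) /=.
have h1 : mass P x - mass P y <= \sum_(i | P i) `|vsub (F x) (F y) i|.
  rewrite /mass -sumrB; apply: ler_sum => i _; rewrite /vsub.
  exact: lerB_dist.
have h2 : mass (predC P) y - mass (predC P) x <= \sum_(i | ~~ P i) `|vsub (F x) (F y) i|.
  rewrite /mass -sumrB; apply: ler_sum => i _; rewrite /vsub distrC.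
  exact: lerB_dist.
lra.
Qed.
End Gen.

Section Pts.
Variable R : realType.
Variables (k d : nat) (gid : 'I_k -> nat).
Hypothesis d_gt0 : (0 < d)%N.

Definition pt (mu : nat -> nat) : 'I_k -> R := fun i => 1 - (mu (gid i))%:R / d%:R.

Lemma pt_Sinf mu : (forall i, mu (gid i) <= 2 * d)%N ->
  (exists i, mu (gid i) = 0%N \/ mu (gid i) = (2 * d)%N) -> Sinf k (pt mu).
Proof.
move=> Hle [i0 Hi0]; have dpos : (0 : R) < d%:R by rewrite ltr0n.
rewrite /Sinf /=; apply/le_anti/andP; split.
  rewrite /linf; apply: bigmax_le => // i _; rewrite /pt.
  have h1 : (mu (gid i))%:R / d%:R <= (2 : R).
    by rewrite ler_pdivrMr // -natrM ler_nat; apply: Hle.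

  have h0 : 0 <= (mu (gid i))%:R / (d%:R : R) by apply: divr_ge0.
  apply: (@le_trans _ _ (`|1 - (mu (gid i))%:R / d%:R|)) => //.
  by rewrite ler_norml; apply/andP; split; lra.
rewrite /linf; apply: (le_trans _ (le_bigmax _ _ i0)); rewrite /pt.
case: Hi0 => ->; first by rewrite mul0r subr0 normr1.
rewrite natrM mulfK; last by rewrite gt_eqF.
have -> : (1 - 2 : R) = - 1 by lra.
by rewrite normrN normr1.
Qed.

Lemma pt_dist mu nu : (forall i, mu (gid i) <= (nu (gid i)).+1 /\ nu (gid i) <= (mu (gid i)).+1)%N ->
  linf (vsub (pt mu) (pt nu)) <= d%:R^-1.
Proof.
move=> H; have dpos : (0 : R) < d%:R by rewrite ltr0n.
rewrite /linf; apply: bigmax_le => [|i _]; first by rewrite invr_ge0 ltW.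
rewrite /vsub /pt.
have -> : 1 - (mu (gid i))%:R / d%:R - (1 - (nu (gid i))%:R / d%:R)
   = ((nu (gid i))%:R - (mu (gid i))%:R) / (d%:R : R) by rewrite mulrBl; lra.
rewrite normrM normfV (gtr0_norm dpos) ler_pdivrMr // mulVf ?gt_eqF //.
case: (H i) => h1 h2.
have a1 : ((mu (gid i))%:R : R) <= (nu (gid i))%:R + 1 by rewrite natr1 ler_nat.
have a2 : ((nu (gid i))%:R : R) <= (mu (gid i))%:R + 1 by rewrite natr1 ler_nat.
by rewrite ler_norml; apply/andP; split; lra.
Qed.

Lemma pt_eq mu i j : mu (gid i) = mu (gid j) -> pt mu i = pt mu j.
Proof. by rewrite /pt => ->. Qed.

End Pts.

Local Close Scope ring_scope.
Local Close Scope classical_set_scope.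
Arguments mass_step {R k F}.
Arguments mass_split {R k F}.
Arguments mass_all {R k F}.
Arguments mu_close {d}.
Arguments mu_tie {d}.
Arguments lam_adj {d}.
Arguments sep_facts {d}.
Arguments mu_top {d}.
Arguments mu_bot {d}.
Arguments lam_le {d}.

Section Groups.
Variables (d k : nat).
Hypothesis d_gt0 : 0 < d.
Hypothesis k_big : (19 ^ (2 * d - 1)).+1 <= k.
Local Notation n := (n d).

Lemma n_eq : n = 2 * d - 1. Proof. rewrite /n; lia. Qed.
Lemma n_gt0 : 0 < n. Proof. rewrite /n; lia. Qed.
Lemma pow_lt h : h <= n -> 19 ^ h < k.
Proof.
move=> hn; apply: leq_trans k_big; rewrite ltnS -n_eq.
by apply: leq_pexp2l.
Qed.

Definition gid (i : 'I_k) : nat := minn n (up_log 19 i.+1).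
Definition G h := [pred i : 'I_k | gid i == h].

Lemma gid_le i : gid i <= n. Proof. rewrite /gid; lia. Qed.

Lemma gid_small h i : gid i = h -> h < n -> i < 19 ^ h.
Proof.
rewrite /gid => e hn.
have u : up_log 19 i.+1 = h by lia.
by rewrite -u; apply: up_logP.
Qed.

Lemma gid_mid h (i : 'I_k) : h < n -> 19 ^ h <= i < 19 ^ h.+1 -> gid i = h.+1.
Proof.
move=> hn /andP[a b]; rewrite /gid (@up_log_eq 19 h i.+1) //; first lia.
by rewrite ltnS a b.
Qed.

Lemma gid_top (i : 'I_k) : 19 ^ n.-1 <= i -> gid i = n.
Proof.
move=> hi; rewrite /gid; apply/minn_idPl.
rewrite leqNgt; apply/negP => hlt.
have : i.+1 <= 19 ^ (up_log 19 i.+1) by apply: up_logP.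
have : 19 ^ (up_log 19 i.+1) <= 19 ^ n.-1 by apply: leq_pexp2l => //; lia.
lia.
Qed.

Lemma k_gt0 : 0 < k. Proof. lia. Qed.
Definition i0 : 'I_k := Ordinal k_gt0.
Lemma gid_i0 : gid i0 = 0. Proof. by rewrite /gid /= up_log1 minn0. Qed.

Lemma km1_lt : k.-1 < k. Proof. lia. Qed.
Definition itop : 'I_k := Ordinal km1_lt.
Lemma gid_itop : gid itop = n.
Proof.
apply: gid_top => /=.
have := @pow_lt n.-1 (leq_pred n).
lia.
Qed.

Lemma card_ratio h : h < n -> 18 * #|G h| <= #|G h.+1|.
Proof.
move=> hn.
have c1 : #|G h| <= 19 ^ h.
  rewrite -(subn0 (19 ^ h)) -(@card_interval k 0 (19 ^ h)); last first.
    by rewrite leq0n /=; apply: ltnW; apply: pow_lt; lia.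
  apply: subset_leq_card; apply/fintype.subsetP => i; rewrite !inE /= => /eqP e.
  exact: gid_small e hn.
have c2 : 19 ^ h.+1 - 19 ^ h <= #|G h.+1|.
  rewrite -(@card_interval k (19 ^ h) (19 ^ h.+1)); last first.
    by rewrite leq_pexp2l //= ltnW // pow_lt.
  apply: subset_leq_card; apply/fintype.subsetP => i; rewrite !inE /= => hi.
  by apply/eqP; apply: gid_mid.
rewrite expnS in c2; lia.
Qed.

Lemma card_top : 18 * k <= 19 * #|G n|.
Proof.
have c2 : k - 19 ^ n.-1 <= #|G n|.
  rewrite -(@card_interval k (19 ^ n.-1) k); last first.
    by rewrite leqnn andbT ltnW // pow_lt // leq_pred.
  apply: subset_leq_card; apply/fintype.subsetP => i; rewrite !inE /= => /andP[hi _].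
  by apply/eqP; apply: gid_top.
have e : 19 ^ n = 19 * 19 ^ n.-1 by rewrite -expnS prednK // n_gt0.
have := @pow_lt n (leqnn n); rewrite e; lia.
Qed.

Lemma G_ne h : h < n -> exists j : 'I_k, gid j = h.+1.
Proof.
move=> hn; have hl : 19 ^ h < k by apply: pow_lt; lia.
exists (Ordinal hl); apply: gid_mid => //=.
by rewrite leqnn /= ltn_exp2l.
Qed.
End Groups.

Arguments n_gt0 {d}.
Arguments pow_lt {d k}.
Arguments gid_le {d k}.
Arguments gid_small {d k}.
Arguments gid_mid {d k}.
Arguments gid_top {d k}.
Arguments gid_i0 {d k}.
Arguments gid_itop {d k}.
Arguments card_ratio {d k}.
Arguments card_top {d k}.
Arguments G_ne {d k}.
Local Open Scope classical_set_scope.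
Local Open Scope ring_scope.

Section Main.
Variable R : realType.
Variables (d k : nat).
Hypothesis d_gt0 : (0 < d)%N.
Hypothesis k_big : ((19 ^ (2 * d - 1)).+1 <= k)%N.
Variable F : ('I_k -> R) -> 'I_k -> R.
Hypothesis Fm : maps_into F.
Hypothesis Fs : step_preserving F.
Hypothesis Hw : forall x y, Sinf k x -> Sinf k y -> linf (vsub x y) <= d%:R^-1 ->
  l1 (vsub (F x) (F y)) < 2^-1.

Local Notation n := (n d).
Local Notation gid := (gid d k).
Local Notation G := (G d k).
Local Notation pt := (pt R k d gid).
Local Notation mass := (mass R k F).
Local Notation itop := (itop d k d_gt0 k_big).
Local Notation i0 := (i0 d k d_gt0 k_big).

Definition xp t := pt (lam d t).
Definition yp t c := pt (mu d t c).

Lemma xp_S t : (t <= 4 * d)%N -> t != (2 * d)%N -> Sinf k (xp t).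
Proof.
move=> ht t2; apply: pt_Sinf => //; first by move=> i; apply: lam_le.
case: (ltnP t (2 * d)) => h.
  by exists i0; left; rewrite (gid_i0 d_gt0 k_big) /lam; lia.
by exists itop; right; rewrite (gid_itop d_gt0 k_big) /lam /n; lia.
Qed.

Lemma yp_S t c : (t <= 4 * d)%N -> t != (2 * d)%N -> Sinf k (yp t c).
Proof.
move=> ht t2; apply: pt_Sinf => //.
  by move=> i; have [_ _] := mu_close d_gt0 t c (gid i) ht t2 (gid_le d_gt0 k_big i).
case: (ltnP t (2 * d)) => h.
  by exists i0; left; rewrite (gid_i0 d_gt0 k_big) mu_top.
by exists itop; right; rewrite (gid_itop d_gt0 k_big) mu_bot //; lia.
Qed.

Lemma dist_xy t c : (t <= 4 * d)%N -> t != (2 * d)%N ->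
  linf (vsub (xp t) (yp t c)) <= d%:R^-1.
Proof.
move=> ht t2; apply: pt_dist => // i.
by have [? ? _] := mu_close d_gt0 t c (gid i) ht t2 (gid_le d_gt0 k_big i); split.
Qed.

Lemma dist_xx t t' : (t <= 4 * d)%N -> (t' <= 4 * d)%N -> t != (2 * d)%N -> t' != (2 * d)%N ->
  (t' = t.+1 \/ (t = (2 * d).-1 /\ t' = (2 * d).+1)) ->
  linf (vsub (xp t) (xp t')) <= d%:R^-1.
Proof.
move=> ht ht' t2 t2' e; apply: pt_dist => // i.
exact: (lam_adj d_gt0 t t' (gid i) (gid_le d_gt0 k_big i) ht ht' t2 t2' e).
Qed.

Lemma grp_sum (f : 'I_k -> R) (Q : pred nat) :
  \sum_(i | Q (gid i)) f i = \sum_(0 <= h < n.+1 | Q h) \sum_(i in G h) f i.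
Proof.
rewrite (exchange_big_dep (fun i => Q (gid i))) /=; last by move=> h i qh; rewrite inE => /eqP ->.
apply: eq_bigr => i qi.
rewrite (eq_bigl (fun h => h == gid i)); last first.
  move=> h; rewrite /= inE eq_sym; case: eqP => [->|]; [by rewrite qi|by rewrite andbF].
by rewrite big_nat1_eq /= ltnS (gid_le d_gt0 k_big).
Qed.

Lemma dilution mu h : (h < n)%N -> Sinf k (pt mu) -> mu h = mu h.+1 ->
  (\sum_(i in G h) `|F (pt mu) i|) * 18 <= \sum_(i in G h.+1) `|F (pt mu) i|.
Proof.
move=> hn S e.
have [j gj] := G_ne d_gt0 k_big h hn.
set c := F (pt mu) j.
have E : forall i, (gid i == h) || (gid i == h.+1) -> F (pt mu) i = c.
  move=> i hi; apply: Fs => //; apply: pt_eq; rewrite gj.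
  by case/orP: hi => /eqP ->.
have L1 : \sum_(i in G h) `|F (pt mu) i| = \sum_(i in G h) `|c|.
  apply: eq_bigr => i hi.
  rewrite (E i) //.
  by rewrite -topredE /= in hi; rewrite hi.
have L2 : \sum_(i in G h.+1) `|F (pt mu) i| = \sum_(i in G h.+1) `|c|.
  apply: eq_bigr => i hi; rewrite (E i) //.
  by rewrite -topredE /= in hi; rewrite hi orbT.
rewrite L1 L2.
rewrite !sumr_const.
rewrite -[`|c| *+ #|G h|]mulr_natr -[`|c| *+ #|G h.+1|]mulr_natr -mulrA.
apply: ler_wpM2l => //.
rewrite -natrM ler_nat mulnC.
exact: card_ratio.
Qed.

Lemma class_bound t c : (t <= 4 * d)%N -> t != (2 * d)%N ->
  mass (fun i => sep d t (gid i) && (odd (gid i) == c)) (xp t) < 4^-1 + 18^-1.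
Proof.
move=> ht t2.
set P := (fun i => _).
have h1 := mass_step Fm P _ _ (xp_S t ht t2) (yp_S t c ht t2).
have h1' := Hw _ _ (xp_S t ht t2) (yp_S t c ht t2) (dist_xy t c ht t2).
suff h2 : mass P (yp t c) <= 18^-1.
  move: h1 h1' h2; set a := mass P _; set b := mass P _; set l := l1 _.
  lra.
set y := yp t c.
pose S h := \sum_(i in G h) `|F y i|.
have S0 h : 0 <= S h by apply: sumr_ge0.
have Sall : \sum_(0 <= h < n.+1) S h = 1.
  rewrite -(grp_sum _ predT) /=.
  exact: (mass_all Fm _ (yp_S t c ht t2)).
have Sn1 : S n.+1 = 0.
  rewrite /S big1 // => i hi.
  rewrite -topredE /= in hi.
  by have := gid_le d_gt0 k_big i; rewrite (eqP hi) ltnn.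
rewrite /mass /P (grp_sum _ (fun h => sep d t h && (odd h == c))) -/S.
have step : forall h, (h < n.+1)%N -> sep d t h && (odd h == c) -> S h <= S h.+1 / 18.
  move=> h hn /andP[s /eqP o].
  have [hlt _ _ _] := sep_facts d_gt0 t h ht t2 hn s.
  rewrite ler_pdivlMr //; apply: dilution => //.
    exact: yp_S.
  exact: (mu_tie d_gt0 t c h ht t2 hn s o).
apply: (le_trans (y := \sum_(0 <= h < n.+1 | sep d t h && (odd h == c)) (S h.+1 / 18))).
  rewrite big_nat_cond [X in _ <= X]big_nat_cond; apply: ler_sum => h /andP[/andP[_ hn] q].
  exact: step.
rewrite -mulr_suml -[X in _ <= X]mul1r ler_pM2r ?invr_gt0 //.
apply: (le_trans (y := \sum_(0 <= h < n.+1) S h.+1)).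
  rewrite [X in _ <= X](bigID (fun h => sep d t h && (odd h == c))) /= lerDl.
  by apply: sumr_ge0 => h _.
have e1 : \sum_(0 <= h < n.+2) S h = 1 by rewrite big_nat_recr //= Sn1 addr0.
have e2 : \sum_(0 <= h < n.+2) S h = S 0 + \sum_(0 <= h < n.+1) S h.+1 by rewrite big_nat_recl.
have := S0 0; move: e1 e2; set u := \sum_(0 <= h < n.+1) S h.+1; set v := \sum_(0 <= h < n.+2) S h.
lra.
Qed.


Lemma c_bound t : (t <= 4 * d)%N -> t != (2 * d)%N ->
  7 / 18 < `|F (xp t) itop| * k%:R.
Proof.
move=> ht t2.
have Sx := xp_S t ht t2.
set x := xp t.
have hs := mass_split Fm (fun i => sep d t (gid i)) x Sx.
have hE := class_bound t true ht t2.
have hO := class_bound t false ht t2.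
have hsp : mass (fun i => sep d t (gid i)) x =
   mass (fun i => sep d t (gid i) && (odd (gid i) == true)) x +
   mass (fun i => sep d t (gid i) && (odd (gid i) == false)) x.
  rewrite /mass (bigID (fun i => odd (gid i) == true)) /=; congr (_ + _).
  by apply: eq_bigl => i; case: (odd (gid i)).
have hB : mass (predC (fun i => sep d t (gid i))) x <= `|F x itop| * k%:R.
  rewrite /mass.
  rewrite (eq_bigr (fun _ => `|F x itop|)); last first.
    move=> i /= /negPn /eqP e; congr (`|_|); apply: Fs => //.
    by apply: pt_eq; rewrite (gid_itop d_gt0 k_big).
  apply: (le_trans (y := \sum_(i < k) `|F x itop|)).
    rewrite [X in _ <= X](bigID (fun i => ~~ sep d t (gid i))) /= lerDl.
    by apply: sumr_ge0.
  by rewrite sumr_const card_ord mulr_natr.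
move: hs hsp hE hO hB.
set a := mass _ x; set b := mass _ x; set e := mass _ x; set o := mass _ x.
set z := `|_| * _.
lra.
Qed.

Lemma sign_step t t' : (t <= 4 * d)%N -> (t' <= 4 * d)%N -> t != (2 * d)%N -> t' != (2 * d)%N ->
  (t' = t.+1 \/ (t = (2 * d).-1 /\ t' = (2 * d).+1)) ->
  (0 < F (xp t) itop) = (0 < F (xp t') itop).
Proof.
move=> ht ht' t2 t2' e.
have Sx := xp_S t ht t2; have Sx' := xp_S t' ht' t2'.
have hl := Hw _ _ Sx Sx' (dist_xx t t' ht ht' t2 t2' e).
have ck := c_bound t ht t2; have ck' := c_bound t' ht' t2'.
set c := F (xp t) itop in ck *; set c' := F (xp t') itop in ck' *.
have hG : `|c - c'| * (#|G n|)%:R <= l1 (vsub (F (xp t)) (F (xp t'))).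
  rewrite /l1 (bigID (fun i => i \in G n)) /=.
  apply: (le_trans (y := \sum_(i in G n) `|vsub (F (xp t)) (F (xp t')) i|)); last first.
    by rewrite lerDl; apply: sumr_ge0.
  rewrite (eq_bigr (fun _ => `|c - c'|)); last first.
    move=> i hi; rewrite -topredE /= in hi; rewrite /vsub /c /c'.
    have q : forall u, xp u i = xp u itop.
      by move=> u; apply: pt_eq; rewrite (gid_itop d_gt0 k_big) (eqP hi).
    by rewrite (Fs _ Sx i itop (q t)) (Fs _ Sx' i itop (q t')).
  by rewrite sumr_const mulr_natr.
have card : 18 * (k%:R : R) <= 19 * (#|G n|)%:R.
  by rewrite -!natrM ler_nat; apply: (card_top d_gt0 k_big).
have kpos : (0 : R) < k%:R by rewrite ltr0n; lia.
have key : `|c - c'| = `|c| + `|c'| -> False.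
  move=> eq; rewrite eq in hG.
  have m : (`|c| + `|c'|) * (18 * k%:R) <= (`|c| + `|c'|) * (19 * (#|G n|)%:R).
    by apply: ler_wpM2l => //; apply: addr_ge0.
  move: m hG hl ck ck'; set K := (k%:R : R); set g := ((#|G n|)%:R : R).
  set l := l1 _; set u := `|c|; set v := `|c'|.
  nra.
case: (boolP (0 < c)) => p; case: (boolP (0 < c')) => p' //; exfalso; apply: key.
  rewrite -leNgt in p'.
  rewrite (gtr0_norm p) (ler0_norm p') gtr0_norm; first by [].
  lra.
rewrite -leNgt in p.
rewrite (ler0_norm p) (gtr0_norm p') ltr0_norm; first by rewrite opprB addrC.
lra.
Qed.

Lemma chain t : (t <= 4 * d)%N -> t != (2 * d)%N ->
  (0 < F (xp t) itop) = (0 < F (xp 0) itop).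
Proof.
elim/ltn_ind: t => t IH ht t2.
case: t IH ht t2 => [//|t] IH ht t2.
case: (eqVneq t (2 * d)) => [et|nt].
  have h1 : ((2 * d).-1 < t.+1)%N by lia.
  rewrite -(IH _ h1); [|lia|lia].
  symmetry; apply: sign_step; [lia|lia|lia|lia|].
  by right; split => //; rewrite et.
rewrite -(IH t (ltnSn t)); [|lia|by []].
symmetry; apply: sign_step; [lia|lia|by []|by []|by left].
Qed.

Lemma xp0 : xp 0 = (fun _ => 1).
Proof.
apply: boolp.funext => i; rewrite /xp /pt.
have -> : lam d 0 (gid i) = 0%N by rewrite /lam; lia.
by rewrite mul0r subr0.
Qed.

Lemma xp4 : xp (4 * d) = (fun _ => -1).
Proof.
apply: boolp.funext => i; rewrite /xp /pt.
have -> : lam d (4 * d) (gid i) = (2 * d)%N by rewrite /lam; lia.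
rewrite natrM mulfK; last by rewrite pnatr_eq0 -lt0n.
lra.
Qed.

Lemma const_val t : (t <= 4 * d)%N -> t != (2 * d)%N ->
  (forall i, xp t i = xp t itop) -> `|F (xp t) itop| * k%:R = 1 /\ forall i, F (xp t) i = F (xp t) itop.
Proof.
move=> ht t2 hc.
have Sx := xp_S t ht t2.
have E : forall i, F (xp t) i = F (xp t) itop by move=> i; apply: Fs.
split => //.
have := mass_all Fm _ Sx.
rewrite (eq_bigr (fun _ => `|F (xp t) itop|)); last by move=> i _; rewrite E.
by rewrite sumr_const card_ord mulr_natr.
Qed.

Lemma contra (Fne : F (fun _ => 1) <> F (fun _ => -1)) : False.
Proof.
have h0 : (0 <= 4 * d)%N by [].
have t0 : 0%N != (2 * d)%N by lia.
have h4 : (4 * d <= 4 * d)%N by [].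
have t4 : (4 * d)%N != (2 * d)%N by lia.
have c0 : forall i, xp 0 i = xp 0 itop by move=> i; rewrite xp0.
have c4 : forall i, xp (4 * d) i = xp (4 * d) itop by move=> i; rewrite xp4.
have [n0 E0] := const_val 0 h0 t0 c0.
have [n4 E4] := const_val (4 * d) h4 t4 c4.
have s := chain (4 * d) h4 t4.
have kpos : (0 : R) < k%:R by rewrite ltr0n; lia.
have eq : F (xp 0) itop = F (xp (4 * d)) itop.
  set a := F (xp 0) itop in n0 s *; set b := F (xp (4 * d)) itop in n4 s *.
  have ab : `|a| = `|b|.
    by apply: (mulIf (x := k%:R)); [rewrite pnatr_eq0 -lt0n; lia| rewrite n0 n4].
  case: (boolP (0 < a)) => p.
    have p' : 0 < b by rewrite s.
    by rewrite -(gtr0_norm p) -(gtr0_norm p') ab.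
  have p' : ~~ (0 < b) by rewrite s.
  rewrite -leNgt in p; rewrite -leNgt in p'.
  by rewrite -[a]opprK -[b]opprK -(ler0_norm p) -(ler0_norm p') ab.
apply: Fne; rewrite -xp0 -xp4; apply: boolp.funext => i.
by rewrite E0 E4.
Qed.
End Main.

Local Open Scope classical_set_scope.
Local Open Scope ring_scope.

Theorem theorem1p4 (R : realType) :
  (forall (d k : nat), (0 < d)%N -> ((19 ^ (2 * d - 1)).+1 <= k)%N ->
    forall F : ('I_k -> R) -> ('I_k -> R),
      maps_into F -> cont_inf_1 F -> step_preserving F ->
      F (fun _ => 1) <> F (fun _ => -1) ->
      (((2%:R)^-1)%:E <= omega F (d%:R)^-1)%E)
  /\
  ~ (exists F : forall k : nat, ('I_k -> R) -> ('I_k -> R),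
       (forall k : nat, (0 < k)%N -> step_preserving (F k) /\ homeo (F k)) /\
       (forall e : R, 0 < e -> exists2 delta : R, 0 < delta &
          forall k : nat, (0 < k)%N -> (omega (F k) delta < e%:E)%E)).
Proof.
have part1 : forall (d k : nat), (0 < d)%N -> ((19 ^ (2 * d - 1)).+1 <= k)%N ->
    forall F : ('I_k -> R) -> ('I_k -> R),
      maps_into F -> cont_inf_1 F -> step_preserving F ->
      F (fun _ => 1) <> F (fun _ => -1) ->
      (((2%:R)^-1)%:E <= omega F (d%:R)^-1)%E.
  move=> d k d_gt0 k_big F Fm Fc Fs Fne.
  rewrite leNgt; apply/negP => H.
  apply: (@contra R d k d_gt0 k_big F Fm Fs _ Fne).
  move=> x y Sx Sy hd.
  have hle : ((l1 (vsub (F x) (F y)))%:E <= omega F d%:R^-1)%E.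
    by apply: ereal_sup_ubound; exists x, y; split.
  by have := le_lt_trans hle H; rewrite lte_fin.
split => //.
move=> [F [HF Heq]].
have [delta dpos Hd] := Heq (2^-1) ltac:(by rewrite invr_gt0).
set d := (Num.truncn (delta^-1)).+1.
have d_gt0 : (0 < d)%N by [].
have dd : (d%:R : R)^-1 <= delta.
  have h := truncnS_gt (delta^-1).
  rewrite -/d in h.
  have dp : (0 : R) < d%:R by rewrite ltr0n.
  rewrite -(invrK delta) lef_pV2 ?posrE ?invr_gt0 //.
  exact: ltW.
set k := (19 ^ (2 * d - 1)).+1.
have kpos : (0 < k)%N by [].
have [sp [Fm [Fc [G [GS Gc GF FG]]]]] := HF k kpos.
have Sc : forall c : R, `|c| = 1 -> Sinf k (fun _ => c).
  move=> c hc; rewrite /Sinf /=; apply/le_anti/andP; split.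
    by apply: (@linf_le R k) => // i; rewrite hc.
  by rewrite -hc; apply: (@le_linf R k (fun _ => c) (Ordinal kpos)).
have Fne : F k (fun _ => 1) <> F k (fun _ => -1).
  move=> e.
  have e1 := GF _ (Sc 1 (normr1 _)).
  have e2 := GF _ (Sc (-1) ltac:(by rewrite normrN normr1)).
  have : (fun _ : 'I_k => (1 : R)) = (fun _ => -1) by rewrite -e1 -e2 e.
  move=> /(congr1 (fun f => f (Ordinal kpos))) /= h.
  lra.
have h1 := part1 d k d_gt0 (leqnn _) (F k) Fm Fc sp Fne.
have h2 : (omega (F k) (d%:R^-1) <= omega (F k) delta)%E.
  apply: le_ereal_sup => r [x [y [Sx Sy hxy ->]]].
  by exists x, y; split => //; apply: le_trans dd.
have h3 := Hd k kpos.
have := le_lt_trans (le_trans h1 h2) h3.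
by rewrite ltxx.
Qed.
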